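(* Let $G\in\mathcal{G}_{\Sigma,\Delta,\pi}$, $r\ge0$, $v\in V(G)$, and write $G^r_v=(H,v)$. Then for every disk $(H',v)\in\mathcal{D}^r_{\Sigma,\Delta,\pi}$ with $H'\subseteq G$, we have $H'\subseteq H$.
   Context: Fix an uncountably infinite set $\mathcal{V}$, sets $\Sigma,\Delta$, finite $\pi$. A graph $G$: countable $V(G)\subset\mathcal{V}$; a set $E(G)$ of pairwise disjoint two-element subsets of $V(G)\times\pi$; partial labelings $\sigma(G):V(G)\rightharpoonup\Sigma$, $\delta(G):E(G)\rightharpoonup\Delta$; $\mathcal{G}_{\Sigma,\Delta,\pi}$ the set of graphs. $G\subseteq H$: componentwise inclusion of $V,E,\sigma,\delta$ (partial functions as sets of pairs). $d_G$ shortest-path distance, $B_G(c,r)=\{u\mid d_G(c,u)\le r\}$. Disk $G^r_c=(H,c)$: $V(H)=B_G(c,r+1)$, $E(H)=\{\{u\!:\!i,v\!:\!j\}\in E(G)\mid\{u,v\}\cap B_G(c,r)\ne\emptyset\}$, $\sigma(H)=\sigma(G)|_{B_G(c,r)}$, $\delta(H)=\delta(G)|_{E(H)}$. $\mathcal{D}^r_{\Sigma,\Delta,\pi}$ is the set of all pointed graphs of the form $K^r_c$ for some graph $K$ and $c\in V(K)$. *)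

(* Defs.v *)
From mathcomp Require Import all_boot.
From mathcomp Require Import boolp classical_sets cardinality.
Set Implicit Arguments. Unset Strict Implicit. Unset Printing Implicit Defensive.
Local Open Scope classical_set_scope.

Section Graphs.
Variables (Vtx Sigma Delta : Type) (pi : finType).

Record graph := Graph {
  gV : set Vtx;
  gE : set (set (Vtx * pi));
  gsigma : Vtx -> option Sigma;
  gdelta : set (Vtx * pi) -> option Delta }.

Definition is_graph (G : graph) : Prop :=
  countable (gV G) /\
  (forall e, gE G e -> exists a b : Vtx * pi,
       a <> b /\ e = [set a; b] /\ gV G a.1 /\ gV G b.1) /\
  (forall e e', gE G e -> gE G e' -> e <> e' -> e `&` e' = set0) /\
  (forall v s, gsigma G v = Some s -> gV G v) /\
  (forall e d, gdelta G e = Some d -> gE G e).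

(* componentwise inclusion, partial functions seen as sets of pairs *)
Definition subgraph (G H : graph) : Prop :=
  gV G `<=` gV H /\ gE G `<=` gE H /\
  (forall v s, gsigma G v = Some s -> gsigma H v = Some s) /\
  (forall e d, gdelta G e = Some d -> gdelta H e = Some d).

Definition adj (G : graph) (u w : Vtx) : Prop :=
  exists i j, gE G [set (u, i); (w, j)].

Fixpoint ball (G : graph) (c : Vtx) (n : nat) : set Vtx :=
  match n with
  | 0 => [set u | u = c /\ gV G c]
  | n'.+1 => ball G c n' `|` [set u | exists w, ball G c n' w /\ adj G w u]
  end.

Definition disk_edges (G : graph) (c : Vtx) (r : nat) : set (set (Vtx * pi)) :=
  [set e | gE G e /\ exists x, e x /\ ball G c r x.1].

Definition disk (G : graph) (r : nat) (c : Vtx) : graph :=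
  Graph (ball G c r.+1) (disk_edges G c r)
        (fun v => if pselect (ball G c r v) then gsigma G v else None)
        (fun e => if pselect (disk_edges G c r e) then gdelta G e else None).

Definition is_disk (r : nat) (Hc : graph * Vtx) : Prop :=
  exists (K : graph) (c : Vtx), is_graph K /\ gV K c /\ Hc = (disk K r c, c).

End Graphs.

(* Main.v *)
Require Import Defs.
From mathcomp Require Import all_boot.
From mathcomp Require Import boolp classical_sets cardinality.
Local Open Scope classical_set_scope.

Lemma ball_le (Vtx Sigma Delta : Type) (pi : finType)
  (K : graph Vtx Sigma Delta pi) (v : Vtx) n m :
  n <= m -> ball K v n `<=` ball K v m.
Proof.
elim: m => [|m IH] le.
  by move: le; rewrite leqn0 => /eqP ->.
move: le; rewrite leq_eqVlt => /orP [/eqP -> //|lt].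
by move=> x Hx; left; apply: IH.
Qed.

Lemma ball_mono (Vtx Sigma Delta : Type) (pi : finType)
  (G K : graph Vtx Sigma Delta pi) (r : nat) (v : Vtx) :
  gV G v -> gE (disk K r v) `<=` gE G ->
  forall n, n <= r.+1 -> ball K v n `<=` ball G v n.
Proof.
move=> Gv HE; elim=> [|n IH] Hn u /=.
  by case=> -> _; split.
case=> [Hu|[w [Hw [i [j Hij]]]]]; first by left; apply: IH => //; exact: ltnW.
right; exists w; split; first by apply: IH => //; exact: ltnW.
exists i, j; apply: HE; split => //; exists (w, i); split; first by left.
by apply: (@ball_le _ _ _ _ _ _ n).
Qed.

Theorem lemma2p5 (Vtx Sigma Delta : Type) (pi : finType)
  (Vtx_uncountable : ~ countable [set: Vtx])
  (G : graph Vtx Sigma Delta pi) (r : nat) (v : Vtx) :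
  is_graph G -> gV G v ->
  forall H' : graph Vtx Sigma Delta pi,
    is_disk r (H', v) -> subgraph H' G -> subgraph H' (disk G r v).
Proof.
move=> _ Gv H' [K [c [_ [_ Heq]]]].
case: Heq => -> <- [SV [SE [Ss Sd]]].
have Hb := @ball_mono _ _ _ _ G K r v Gv SE.
have HD : disk_edges K v r `<=` disk_edges G v r.
  move=> e [He [x [ex bx]]]; split; first by apply: SE; split=> //; exists x.
  by exists x; split => //; exact: (Hb r (leqnSn r)).
split; first exact: (Hb r.+1 (leqnn _)).
split; first by move=> e /HD.
split.
  move=> u s /=; case: pselect => // bu Hs.
  have := Ss u s; rewrite /= ; case: pselect => // _ /(_ Hs) ->.
  by case: pselect => // nb; exfalso; apply: nb; exact: (Hb r (leqnSn r)).
move=> e d /=; case: pselect => // be Hd.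
have := Sd e d; rewrite /= ; case: pselect => // _ /(_ Hd) ->.
by case: pselect => // nb; exfalso; exact: nb (HD _ be).
Qed.
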